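(* Let $d\ge1$, $p>1$ and $s\in(0,1)$ with $sp<d$, and let $\mathcal{C}=C(d,p)\,\frac{s(1-s)}{(d-sp)^{p-1}}$ be the fractional Sobolev constant described in the context. Then for every $u\in W^{s,p}(\mathbb{R}^d)$ and every real $c>0$, \[ \int_{\mathbb{R}^d}|u(x)|^p\log\left(\frac{|u(x)|^p}{\|u\|_{L^p(\mathbb{R}^d)}^p}\right)dx+\frac{d}{s}(1+\log c)\|u\|_{L^p(\mathbb{R}^d)}^p\le \frac{d\,e^{p-1}c^p\,\mathcal{C}}{sp}\int_{\mathbb{R}^d}\int_{\mathbb{R}^d}\frac{|u(x)-u(y)|^p}{|x-y|^{d+sp}}\,dx\,dy. \]
   Context: $W^{s,p}(\mathbb{R}^d)$ is the completion of $C_c^\infty(\mathbb{R}^d)$ under the norm $(\|u\|_{L^p}^p+[u]_{W^{s,p}}^p)^{1/p}$, where $[u]_{W^{s,p}(\mathbb{R}^d)}^p=\int_{\mathbb{R}^d}\int_{\mathbb{R}^d}\frac{|u(x)-u(y)|^p}{|x-y|^{d+sp}}dx\,dy$. $C(d,p)>0$ is a constant depending only on $d$ and $p$ such that, with $\mathcal{C}=C(d,p)\frac{s(1-s)}{(d-sp)^{p-1}}$ and $p^*_s=\frac{dp}{d-sp}$, the fractional Sobolev inequality $\|u\|_{L^{p^*_s}(\mathbb{R}^d)}\le \mathcal{C}^{1/p}[u]_{W^{s,p}(\mathbb{R}^d)}$ holds for all $s\in(0,1)$ with $sp<d$ and all $u\in W^{s,p}(\mathbb{R}^d)$ (such a constant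 exists by a theorem of Maz'ya and Shaposhnikova). *)

(* Defs.v *)
From HB Require Import structures.
From mathcomp Require Import all_boot all_order all_algebra.
From mathcomp Require Import all_classical all_reals all_analysis.
Set Implicit Arguments. Unset Strict Implicit. Unset Printing Implicit Defensive.
Import Order.TTheory GRing.Theory Num.Theory.
Import numFieldNormedType.Exports.
Local Open Scope classical_set_scope.
Local Open Scope ring_scope.

(* R^d is modelled as d.-tuple R, with the product (Borel) sigma-algebra
   generated by the coordinate projections (library instance). *)

Section Defs.
Variables (R : realType) (d : nat).

Definition edist (x y : d.-tuple R) : R :=
  Num.sqrt (\sum_(i < d) (tnth x i - tnth y i) ^+ 2).

Definition box (a b : d.-tuple R) : set (d.-tuple R) :=
  [set x | forall i : 'I_d, tnth a i <= tnth x i <= tnth b i].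

(* mu is (the Borel restriction of) the Lebesgue measure on R^d:
   it gives every closed box its Euclidean volume. This characterizes the
   measure uniquely on the product sigma-algebra. *)
Definition is_lebesgue (mu : {measure set (d.-tuple R) -> \bar R}) : Prop :=
  forall a b : d.-tuple R, (forall i, tnth a i <= tnth b i) ->
    mu (box a b) = (\prod_(i < d) (tnth b i - tnth a i))%:E.

Definition upd (x : d.-tuple R) (i : 'I_d) (t : R) : d.-tuple R :=
  [tuple if j == i then t else tnth x j | j < d].

Definition partial (i : 'I_d) (f : d.-tuple R -> R) : d.-tuple R -> R :=
  fun x => derive1 (fun t => f (upd x i t)) (tnth x i).

Definition has_partial (i : 'I_d) (f : d.-tuple R -> R) : Prop :=
  forall x, derivable (fun t => f (upd x i t)) (tnth x i) 1.

Fixpoint iter_partial (js : seq 'I_d) (f : d.-tuple R -> R) :=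
  match js with
  | [::] => f
  | i :: js' => partial i (iter_partial js' f)
  end.

Definition econtinuous (f : d.-tuple R -> R) : Prop :=
  forall x (e : R), 0 < e -> exists2 del : R, 0 < del &
    forall y, edist x y < del -> `|f y - f x| < e.

Definition smooth (f : d.-tuple R -> R) : Prop :=
  forall js : seq 'I_d, econtinuous (iter_partial js f) /\
    forall i, has_partial i (iter_partial js f).

Definition compact_support (f : d.-tuple R -> R) : Prop :=
  exists M : R, forall x, M < edist x [tuple of nseq d 0] -> f x = 0.

Definition Cc_infty (f : d.-tuple R -> R) : Prop := smooth f /\ compact_support f.

Variable mu : {measure set (d.-tuple R) -> \bar R}.

Definition gagliardo_p (s p : R) (u : d.-tuple R -> R) : \bar R :=
  (\int[mu]_x \int[mu]_y
     ((`|u x - u y| `^ p) / (edist x y `^ (d%:R + s * p)))%:E)%E.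

Definition Lp_p (p : R) (u : d.-tuple R -> R) : \bar R :=
  (\int[mu]_x (`|u x| `^ p)%:E)%E.

(* W^{s,p}(R^d): the completion of C_c^infty under the norm
   (||.||_p^p + [.]^p)^{1/p}, realized concretely as the measurable functions
   that are limits of C_c^infty functions in that norm. *)
Definition in_Wsp (s p : R) (u : d.-tuple R -> R) : Prop :=
  measurable_fun [set: d.-tuple R] u /\
  exists phi : nat -> d.-tuple R -> R, (forall n, Cc_infty (phi n)) /\
    ((fun n => Lp_p p (fun x => phi n x - u x)%R + gagliardo_p s p (fun x => phi n x - u x)%R)%E
       @ \oo --> 0%E).

Definition calC (Cdp s p : R) : R :=
  Cdp * (s * (1 - s)) / ((d%:R - s * p) `^ (p - 1)).

Definition sobolev_constant (Cdp p : R) : Prop :=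
  0 < Cdp /\
  forall s : R, 0 < s < 1 -> s * p < d%:R ->
  forall u, in_Wsp s p u ->
    ('N[mu]_((d%:R * p / (d%:R - s * p))%:E)[EFin \o u] <=
       (calC Cdp s p `^ p^-1)%:E * (gagliardo_p s p u `^ p^-1))%E.

End Defs.

(* Main.v *)
Require Import Defs.
From HB Require Import structures.
From mathcomp Require Import all_boot all_order all_algebra.
From mathcomp Require Import all_classical all_reals all_analysis measurable_realfun.
From mathcomp Require Import ring lra.
Import Order.TTheory GRing.Theory Num.Theory.
Import numFieldNormedType.Exports.
Local Open Scope classical_set_scope.
Local Open Scope ring_scope.

Lemma mpow d (T : measurableType d) (R : realType) (u : T -> R) (e : R) :
  measurable_fun [set: T] u -> measurable_fun [set: T] (fun x => `|u x| `^ e).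
Proof.
move=> mu_; apply: (measurableT_comp (measurable_powR e)).
apply: measurableT_comp => //; exact: normr_measurable.
Qed.

Lemma ipow d (T : measurableType d) (R : realType) (mu : {measure set T -> \bar R})
  (u : T -> R) (e M : R) :
  measurable_fun [set: T] u ->
  (\int[mu]_x (`|u x| `^ e)%:E = M%:E)%E ->
  mu.-integrable [set: T] (fun x => (`|u x| `^ e)%:E).
Proof.
move=> mu_ hM; apply/integrableP; split.
  by apply/measurable_EFinP; exact: mpow.
rewrite (eq_integral (fun x => (`|u x| `^ e)%:E)); first by rewrite hM ltry.
by move=> x _; rewrite gee0_abs // lee_fin powR_ge0.
Qed.
Lemma le_integral_mi d (T : measurableType d) (R : realType)
  (mu : {measure set T -> \bar R}) (f g : T -> \bar R) :
  measurable_fun [set: T] f -> mu.-integrable [set: T] g ->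
  (forall x, f x <= g x)%E -> (\int[mu]_x f x <= \int[mu]_x g x)%E.
Proof.
move=> mf intg fg; rewrite integralE [leRHS]integralE leeB//.
- apply: ge0_le_integral => //.
  + exact: measurable_funepos.
  + by move/integrableP : intg => [+ _]; exact: measurable_funepos.
  + by move=> x _; apply: (@funepos_le _ _ setT) => [y _|]; [exact: fg|exact: in_setT].
- apply: ge0_le_integral => //.
  + by move/integrableP : intg => [+ _]; exact: measurable_funeneg.
  + exact: measurable_funeneg.
  + by move=> x _; apply: (@funeneg_le _ _ setT) => [y _|]; [exact: fg|exact: in_setT].
Qed.
Lemma pw (R : realType) (p q r N b v : R) : 0 < p -> q = p * r -> 1 < r -> 0 < N -> 0 <= v ->
  v `^ p * ln (v `^ p / N) <=
  (expR (b + (1 - r) * ln N) * v `^ q - (1 + b) * v `^ p) / (r - 1).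
Proof.
move=> p0 qE r1 N0; rewrite le_eqVlt => /predU1P[<-|v0].
  have q0 : q != 0 by rewrite qE mulf_neq0 // gt_eqF // (lt_trans ltr01).
  by rewrite (powR0 q0) (powR0 (lt0r_neq0 p0)) !(mul0r, mulr0, subr0).

rewrite ler_pdivlMr ?subr_gt0 //.
have A0 : 0 < v `^ p by rewrite powR_gt0.
rewrite lnM ?posrE ?invr_gt0 // lnV ?posrE //.
rewrite /powR gt_eqF // expRK.
set a := ln v.
set z := b + (1 - r) * ln N + p * (r - 1) * a.
have key : expR (p * a) * (1 + z) <= expR (p * a) * expR z.
  by rewrite ler_wpM2l ?expR_ge0 ?expR_ge1Dx.
have e1 : expR (b + (1 - r) * ln N) * expR (q * a) = expR (p * a) * expR z.
  by rewrite -!expRD qE /z; congr expR; ring.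
rewrite e1; move: key; rewrite /z; nra.
Qed.
Lemma fin_ineq (R : realType) (p r N L c : R) : 1 < r -> 0 < p -> 0 < N -> 0 <= L -> 0 < c ->
  exists b, (expR (b + (1 - r) * ln N) * L `^ (p * r) - (1 + b) * N) / (r - 1)
            + p * (r / (r - 1)) * (1 + ln c) * N
          <= (r / (r - 1)) * expR (p - 1) * c `^ p * L `^ p.
Proof.
move=> r1 p0 N0; rewrite le_eqVlt => /predU1P[<-|L0] c0.
  have pr0 : p * r != 0 by rewrite mulf_neq0 // lt0r_neq0 // (lt_trans ltr01).
  exists (r * p * (1 + ln c) - 1).
  rewrite (powR0 pr0) (powR0 (lt0r_neq0 p0)) !(mulr0, mul0r).
  have r10 : r - 1 != 0 by rewrite subr_eq0 gt_eqF.
  rewrite le_eqVlt; apply/orP; left; apply/eqP; field; exact: r10.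
exists (r * ln N - p * r * ln L).
have r10 : r - 1 != 0 by rewrite subr_eq0 gt_eqF.
set t := p * ln L - ln N + p - 1 + p * ln c.
have key : N * (1 + t) <= N * expR t by apply: ler_wpM2l; [exact: ltW | exact: expR_ge1Dx].
have e1 : expR (r * ln N - p * r * ln L + (1 - r) * ln N) * L `^ (p * r) = N.
  rewrite /powR gt_eqF // -expRD -[RHS]lnK ?posrE //; congr expR; ring.
have e2 : expR (p - 1) * (c `^ p * L `^ p) = N * expR t.
  rewrite /powR !gt_eqF // -!expRD -[in RHS](lnK (x:=N)) ?posrE // -expRD /t.
  congr expR; ring.
rewrite e1 -[X in _ <= X]mulrA -[X in _ <= X]mulrA e2.
have -> : (N - (1 + (r * ln N - p * r * ln L)) * N) / (r - 1) + p * (r / (r - 1)) * (1 + ln c) * N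
   = (r / (r - 1)) * (N * (1 + t)).
  rewrite /t; field; exact: r10.
rewrite ler_wpM2l //; apply: divr_ge0; [lra|]; rewrite subr_ge0 ltW //.
Qed.

Theorem theorem1p2 (R : realType) (d : nat)
  (mu : {measure set (d.-tuple R) -> \bar R})
  (p s Cdp : R) (u : d.-tuple R -> R) (c : R) :
  (1 <= d)%N -> 1 < p -> 0 < s < 1 -> s * p < d%:R ->
  is_lebesgue mu ->
  sobolev_constant mu Cdp p ->
  in_Wsp mu s p u -> 0 < c ->
  let Np := fine (Lp_p mu p u) in
  ((\int[mu]_x (`|u x| `^ p * ln (`|u x| `^ p / Np))%:E)
     + (d%:R / s * (1 + ln c) * Np)%:E
   <= (d%:R * expR (p - 1) * c `^ p * @calC R d Cdp s p / (s * p))%:E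
        * gagliardo_p mu s p u)%E.
Proof.
move=> d1 p1 /andP[s0 s1] spd _ sob wsp c0; cbv zeta; set Np := fine (Lp_p mu p u).
have mu_ : measurable_fun [set: d.-tuple R] u := wsp.1.
have p0 : 0 < p by lra.
have sp0 : 0 < s * p by rewrite mulr_gt0.
have C0 : 0 <= calC d Cdp s p.
  rewrite /calC; apply: divr_ge0; last exact: powR_ge0.
  apply: mulr_ge0; first exact: ltW sob.1.
  apply: mulr_ge0; lra.
have K0 : 0 <= d%:R * expR (p - 1) * c `^ p * calC d Cdp s p / (s * p).
  apply: divr_ge0; last exact: ltW.
  apply: mulr_ge0 => //; apply: mulr_ge0; [apply: mulr_ge0; [exact: ler0n | exact: expR_ge0] | exact: powR_ge0].
have G0 : (0 <= gagliardo_p mu s p u)%E.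
  apply: integral_ge0 => x _; apply: integral_ge0 => y _.
  by rewrite lee_fin; apply: divr_ge0; exact: powR_ge0.
have LP0 : (0 <= Lp_p mu p u)%E by apply: integral_ge0 => x _; rewrite lee_fin powR_ge0.
have N0 : 0 <= Np by apply: fine_ge0.
have [Nz|Npos] := eqVneq Np 0.
  rewrite Nz mulr0 adde0.
  rewrite (eq_integral (fun _ => 0%E)); last first.
    by move=> x _; rewrite invr0 mulr0 ln0 // mulr0.
  by rewrite integral0 mule_ge0.
have {Npos}Npos : 0 < Np by rewrite lt0r Npos.
have LPE : Lp_p mu p u = Np%:E.
  move: LP0 Npos; rewrite /Np; case: (Lp_p mu p u) => //=.
  by rewrite ltxx.
have Kpos : 0 < d%:R * expR (p - 1) * c `^ p * calC d Cdp s p / (s * p).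
  apply: divr_gt0 => //; apply: mulr_gt0; last first.
    rewrite /calC; apply: divr_gt0; last by apply: powR_gt0; rewrite subr_gt0.
    by apply: mulr_gt0; [exact: sob.1 | apply: mulr_gt0; lra].
  apply: mulr_gt0; last exact: powR_gt0.
  by apply: mulr_gt0; [rewrite ltr0n | exact: expR_gt0].
set G := gagliardo_p mu s p u.
move: G0; rewrite -/G; case eG: G => [g| |] G0; last by [].
  2: by rewrite mulry gtr0_sg // mul1e leey.
have := sob.2 s (andb_true_intro (conj s0 s1)) spd u wsp.
rewrite -/G eG poweR_EFin -EFinM unlock /=.
set qq := d%:R * p / (d%:R - s * p).
set r := d%:R / (d%:R - s * p).
have dsp0 : 0 < d%:R - s * p by rewrite subr_gt0.
have qqE : qq = p * r by rewrite /qq /r; ring.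
have r1 : 1 < r by rewrite /r ltr_pdivlMr // mul1r ltrBlDr ltrDl.
have qq0 : 0 < qq by rewrite qqE mulr_gt0 // (lt_trans ltr01).
have M0 : (0 <= \int[mu]_x (`|u x| `^ qq)%:E)%E.
  by apply: integral_ge0 => x _; rewrite lee_fin powR_ge0.
case eM: (\int[mu]_x (`|u x| `^ qq)%:E)%E M0 => [M| |] M0 Hs; last by [].
  2: by rewrite poweRyr ?invr_neq0 ?lt0r_neq0 // in Hs.
rewrite poweR_EFin lee_fin in Hs.
set L := M `^ qq^-1 in Hs.
have L0 : 0 <= L by apply: powR_ge0.
have hY : L `^ p <= calC d Cdp s p * g.
  have H : L `^ p <= (calC d Cdp s p `^ p^-1 * g `^ p^-1) `^ p.
    apply: ge0_ler_powR => //; [exact: ltW | by rewrite nnegrE mulr_ge0 ?powR_ge0].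
  move: H; rewrite powRM ?powR_ge0 // -!powRrM !mulVf ?lt0r_neq0 // !powRr1 //.
have hM : L `^ (p * r) = M.
  by rewrite -qqE /L -powRrM mulVf ?lt0r_neq0 // powRr1.
have [b hb] := @fin_ineq R p r Np L c r1 p0 Npos L0 c0.
have r10 : r - 1 != 0 by rewrite subr_eq0 gt_eqF.
set E := expR (b + (1 - r) * ln Np).
have mP := @mpow _ _ R u p mu_.
have iP : mu.-integrable [set: d.-tuple R] (fun x => (`|u x| `^ p)%:E) := @ipow _ _ R mu u p Np mu_ LPE.
rewrite qqE in eM.
have iQ : mu.-integrable [set: d.-tuple R] (fun x => (`|u x| `^ (p * r))%:E) := @ipow _ _ R mu u (p * r) M mu_ eM.
have hsum : forall x, (((E * `|u x| `^ (p * r) - (1 + b) * `|u x| `^ p) / (r - 1))%:E =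
    (E / (r - 1))%:E * (`|u x| `^ (p * r))%:E + (- (1 + b) / (r - 1))%:E * (`|u x| `^ p)%:E)%E.
  by move=> x; rewrite -!EFinM -EFinD; congr EFin; field.
have iH : mu.-integrable [set: d.-tuple R]
    (fun x => ((E * `|u x| `^ (p * r) - (1 + b) * `|u x| `^ p) / (r - 1))%:E).
  apply: (eq_integrable _ (fun x => ((E / (r - 1))%:E * (`|u x| `^ (p * r))%:E
     + (- (1 + b) / (r - 1))%:E * (`|u x| `^ p)%:E)%E)) => //.
  - by apply: integrableD => //; apply: integrableZl.
have I1 : (\int[mu]_x (`|u x| `^ p * ln (`|u x| `^ p / Np))%:E
    <= ((E * M - (1 + b) * Np) / (r - 1))%:E)%E.
  apply: le_trans; first apply: (@le_integral_mi _ _ R mu _ _ _ iH).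
  - apply/measurable_EFinP; apply: measurable_funM => //.
    apply: measurableT_comp; first exact: measurable_ln.
    by apply: measurable_funM => //; exact: measurable_cst.
  - by move=> x; rewrite lee_fin; apply: pw.
  rewrite (eq_integral _ _ (fun x _ => hsum x)) integralD //; last 2 first.
    exact: integrableZl.
    exact: integrableZl.
  rewrite !integralZl // eM.
  have -> : (\int[mu]_x (`|u x| `^ p)%:E)%E = Np%:E by exact: LPE.
  by rewrite -!EFinM -EFinD lee_fin le_eqVlt; apply/orP; left; apply/eqP; field.
apply: le_trans (leeD2r _ I1) _.
rewrite -EFinD -EFinM lee_fin.
have s0' : s != 0 by rewrite lt0r_neq0.
have p0' : p != 0 by rewrite lt0r_neq0.
have dsp0' : d%:R - s * p != 0 by rewrite lt0r_neq0.
have r1E : r - 1 = s * p / (d%:R - s * p) by rewrite /r; field.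
have rr : r / (r - 1) = d%:R / (s * p).
  by rewrite r1E /r; field; rewrite p0' s0' dsp0'.
have dsE : d%:R / s = p * (r / (r - 1)) by rewrite rr; field; rewrite ?p0' ?s0'.
rewrite dsE -hM.
apply: le_trans hb _.
have k0 : 0 <= r / (r - 1) * expR (p - 1) * c `^ p.
  rewrite rr; apply: mulr_ge0; last exact: powR_ge0.
  by apply: mulr_ge0; [apply: divr_ge0; [exact: ler0n | exact: ltW] | exact: expR_ge0].
apply: le_trans (ler_wpM2l k0 hY) _.
rewrite rr le_eqVlt; apply/orP; left; apply/eqP; field; by rewrite p0' s0'.
Qed.
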